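(* The closure of the circuit graph, $\operatorname{cl}G_X(\mathcal{A})$, contains no lines.
   Context: $X\subset\mathbb{R}^n$ is a nonempty closed convex set and $\mathcal{A}\subset\mathbb{R}^n$ is a nonempty finite set such that the functions $x\mapsto\exp(\alpha^Tx)$, $\alpha\in\mathcal{A}$, are linearly independent on $X$. $\mathbb{R}^{\mathcal{A}}$ denotes real vectors indexed by $\mathcal{A}$. $\mathcal{A}\nu=\sum_\alpha\alpha\nu_\alpha$. $\sigma_X(y)=\sup\{y^Tx:x\in X\}$. $N_\beta=\{\nu\in\mathbb{R}^{\mathcal{A}}:\nu_\alpha\ge0\ \forall\alpha\neq\beta,\ \sum_\alpha\nu_\alpha=0\}$. A vector $\nu^\star\in N_\beta$ is an $X$-circuit of $\mathcal{A}$ if (1) $\nu^\star\neq0$, (2) $\sigma_X(-\mathcal{A}\nu^\star)<\infty$, and (3) $\nu^\star$ cannot be written as a convex combination of two non-proportional vectors $\nu^{(1)},\nu^{(2)}\in N_\beta$ such that the map $\nu\mapsto\sigma_X(-\mathcal{A}\nu)$ is affine on the segment $[\nu^{(1)},\nu^{(2)}]$. $\Lambda_X(\mathcal{A})$ is the set of all $X$-circuits $\lambda$ (over all $\beta\in\mathcal{A}$) normalized so that the unique negative entry equals $-1$. The functional form of $\lambda\in\Lambda_X(\mathcal{A})$ is $\phi_\lambda=(\lambda,\sigma_X(-\mathcal{A}\lambda))\in\mathbb{R}^{\mathcal{A}}\times\mathbb{R}$. The circuit graph is $G_X(\mathcal{A})=\operatorname{cone}(\{\phi_\lambda:\lambda\in\Lambda_X(\mathcal{A})\}\cup\{(0,1)\})\subset\mathbb{R}^{\mathcal{A}}\times\mathbb{R}$.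 *)

(* Defs.v *)
From HB Require Import structures.
From mathcomp Require Import all_boot all_order all_algebra.
From mathcomp Require Import all_classical all_reals all_analysis.
Set Implicit Arguments. Unset Strict Implicit. Unset Printing Implicit Defensive.
Import Order.TTheory GRing.Theory Num.Theory.
Import numFieldNormedType.Exports.
Local Open Scope classical_set_scope.
Local Open Scope ring_scope.

Section Defs.
Variable R : realType.
Variables (n m : nat).
(* The finite set A = {a i | i < m} of exponents in R^n; R^A = 'rV[R]_m. *)
Variable a : 'I_m -> 'rV[R]_n.
Variable X : set 'rV[R]_n.

Definition dotp (y x : 'rV[R]_n) : R := \sum_(k < n) y 0 k * x 0 k.

Definition convexR (S : set 'rV[R]_n) : Prop :=
  forall x y (t : R), S x -> S y -> 0 <= t -> t <= 1 -> S (t *: x + (1 - t) *: y).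

Definition Amul (nu : 'rV[R]_m) : 'rV[R]_n := \sum_(i < m) nu 0 i *: a i.

Definition sigmaX (y : 'rV[R]_n) : \bar R := ereal_sup [set (dotp y x)%:E | x in X].

Definition sigmaA (nu : 'rV[R]_m) : \bar R := sigmaX (- Amul nu).

Definition Nbeta (beta : 'I_m) : set 'rV[R]_m :=
  [set nu | (forall i, i != beta -> 0 <= nu 0 i) /\ \sum_(i < m) nu 0 i = 0].

Definition proportional (u v : 'rV[R]_m) : Prop :=
  exists c : R, u = c *: v \/ v = c *: u.

Definition affine_on_segment (nu1 nu2 : 'rV[R]_m) : Prop :=
  forall s : R, 0 <= s -> s <= 1 ->
    sigmaA ((1 - s) *: nu1 + s *: nu2) =
    ((1 - s)%:E * sigmaA nu1 + s%:E * sigmaA nu2)%E.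

Definition X_circuit (beta : 'I_m) (nu : 'rV[R]_m) : Prop :=
  [/\ Nbeta beta nu,
      nu != 0,
      (sigmaA nu < +oo)%E &
      ~ (exists nu1 nu2 (t : R),
           Nbeta beta nu1 /\ Nbeta beta nu2 /\ ~ proportional nu1 nu2 /\
           0 < t /\ t < 1 /\
           nu = t *: nu1 + (1 - t) *: nu2 /\
           affine_on_segment nu1 nu2)].

(* Lambda_X(A): circuits normalized so the unique negative entry is -1 *)
Definition LambdaX : set 'rV[R]_m :=
  [set lam | exists beta, X_circuit beta lam /\ lam 0 beta = -1].

Definition phi (lam : 'rV[R]_m) : 'rV[R]_m * R := (lam, fine (sigmaA lam)).

End Defs.

Definition conic_hull (R : realType) (V : lmodType R) (S : set V) : set V :=
  [set v | exists (k : nat) (c : 'I_k -> R) (s : 'I_k -> V),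
      (forall i, 0 <= c i) /\ (forall i, S (s i)) /\ v = \sum_(i < k) c i *: s i].

Definition circuit_graph (R : realType) (n m : nat) (a : 'I_m -> 'rV[R]_n)
    (X : set 'rV[R]_n) : set ('rV[R]_m * R) :=
  conic_hull ((phi a X @` LambdaX a X) `|` [set ((0 : 'rV[R]_m), (1 : R))]).

(* Main.v *)
Require Import Defs.
From HB Require Import structures.
From mathcomp Require Import all_boot all_order all_algebra.
From mathcomp Require Import all_classical all_reals all_analysis.
From mathcomp Require Import ring lra.
Import Order.TTheory GRing.Theory Num.Theory.
Import numFieldNormedType.Exports.
Local Open Scope classical_set_scope.
Local Open Scope ring_scope.
Set Implicit Arguments. Unset Strict Implicit. Unset Printing Implicit Defensive.

Section S.
Variables (R : realType) (m : nat).
Definition lin (w : 'I_m -> R) (c : R) (q : 'rV[R]_m * R) : R :=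
  c * q.2 + \sum_(i < m) w i * q.1 0 i.

Lemma lin_cont w c : continuous (lin w c).
Proof.
move=> q.
have H1 : {for q, continuous (fun q : 'rV[R]_m * R => q.2)}.
  exact: cvg_snd.
have H2 : forall i, {for q, continuous (fun q : 'rV[R]_m * R => q.1 0 i)}.
  move=> i. apply: (@cvg_comp _ _ _ fst (fun M : 'rV[R]_m => M 0 i)).
    exact: cvg_fst.
  exact: coord_continuous.
rewrite /lin.
apply: cvgD.
  apply: cvgM => //. exact: cvg_cst.
elim: (index_enum _) => [|i s IH].
  rewrite (_ : (fun x => _) = fun _ => 0); first (rewrite big_nil; exact: cvg_cst).
  by apply: funext => x; rewrite big_nil.
rewrite (_ : (fun x => _) = fun x : 'rV[R]_m * R => w i * x.1 0 i + \sum_(j <- s) w j * x.1 0 j); last first.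
  by apply: funext => x; rewrite big_cons.
rewrite big_cons; apply: cvgD => //.
apply: cvgM; [exact: cvg_cst | exact: H2].
Qed.

Lemma linD w c x y : lin w c (x + y) = lin w c x + lin w c y.
Proof.
rewrite /lin /= mulrDr.
under eq_bigr do rewrite mxE mulrDr.
by rewrite big_split /=; lra.
Qed.

Lemma linZ w c k x : lin w c (k *: x) = k * lin w c x.
Proof.
rewrite /lin /= mulrDr.
under eq_bigr do rewrite mxE mulrCA.
by rewrite -mulr_sumr mulrCA.
Qed.

Lemma lin0 w c : lin w c 0 = 0.
Proof. by rewrite -(scale0r 0) linZ mul0r. Qed.

Lemma lin_cone w c (S : set ('rV[R]_m * R)) :
  (forall g, S g -> 0 <= lin w c g) ->
  forall q, closure (conic_hull S) q -> 0 <= lin w c q.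
Proof.
move=> HS q.
have : closure (conic_hull S) `<=` [set q | 0 <= lin w c q].
  rewrite [X in _ `<=` X](closure_id _).1; last first.
    apply: (@preimage_closed _ _ (lin w c) [set x | 0 <= x]).
      by move=> x _; apply: lin_cont.
    exact: closed_ge.
  apply: closureS => v [k [cc [s [Hc [Hs ->]]]]].
  rewrite /=.
  elim: (index_enum _) => [|i r IH]; first by rewrite big_nil lin0.
  rewrite big_cons linD linZ.
  by apply: addr_ge0 => //; apply: mulr_ge0 => //; apply: HS.
by apply.
Qed.

Lemma lin_pert1 w c (j : 'I_m) e q :
  lin (fun i => w i + e * (i == j)%:R) c q = lin w c q + e * q.1 0 j.
Proof.
rewrite /lin.
under eq_bigr do rewrite mulrDl.
rewrite big_split /=.
have -> : \sum_(i < m) e * (i == j)%:R * q.1 0 i = e * q.1 0 j.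
  rewrite (bigD1 j) //= eqxx mulr1 big1 ?addr0 // => i /negPf ->.
  by rewrite mulr0 mul0r.
ring.
Qed.

Lemma lin_pert2 w c e q : lin w (c + e) q = lin w c q + e * q.2.
Proof. by rewrite /lin; ring. Qed.

Lemma lin_line w c p d :
  (forall t : R, 0 <= lin w c (p + t *: d)) -> lin w c d = 0.
Proof.
move=> H; apply/eqP; apply/negPn/negP => hd.
have := H (- (lin w c p + 1) / lin w c d).
rewrite linD linZ mulrAC -mulrA divff // mulr1.
lra.
Qed.
End S.

Section M.
Variables (R : realType) (n m : nat) (a : 'I_m -> 'rV[R]_n) (X : set 'rV[R]_n).

Lemma dotp_Amul lam x :
  dotp (- Amul a lam) x = - \sum_(i < m) lam 0 i * dotp (a i) x.
Proof.
rewrite /dotp /Amul.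
under eq_bigr do rewrite !mxE summxE mulNr mulr_suml.
rewrite sumrN; congr (- _).
rewrite exchange_big /=; apply: eq_bigr => i _.
rewrite mulr_sumr; apply: eq_bigr => k _.
by rewrite mxE mulrA.
Qed.

Lemma gap_ge0 lam x : (sigmaA a X lam < +oo)%E -> X x ->
  0 <= fine (sigmaA a X lam) + \sum_(i < m) lam 0 i * dotp (a i) x.
Proof.
move=> hlt Xx.
have H : ((dotp (- Amul a lam) x)%:E <= sigmaA a X lam)%E.
  by apply: ereal_sup_ubound; exists x.
move: hlt H; rewrite dotp_Amul.
case: (sigmaA a X lam) => [r| |] //= _.
rewrite lee_fin; lra.
Qed.


Lemma sep_pair (x0 : 'rV[R]_n) : X x0 ->
  (forall c : 'I_m -> R,
     (forall x, X x -> \sum_(i < m) c i * expR (dotp (a i) x) = 0) ->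
     forall i, c i = 0) ->
  forall i j : 'I_m, i != j -> exists p q, X p /\ X q /\
    (dotp (a i) p - dotp (a i) q) - (dotp (a j) p - dotp (a j) q) != 0.
Proof.
move=> Xx0 Hind i j hij.
apply: contrapT => hne.
pose k := dotp (a i) x0 - dotp (a j) x0.
pose c := fun l : 'I_m => (l == i)%:R - (l == j)%:R * expR k.
have : c i = 0.
  apply: Hind => x Xx.
  have e : dotp (a i) x = k + dotp (a j) x.
    have : ~ ((dotp (a i) x - dotp (a i) x0) - (dotp (a j) x - dotp (a j) x0) != 0).
      by move=> h; apply: hne; exists x, x0.
    move/negP; rewrite negbK => /eqP h; rewrite /k; lra.
  rewrite /c.
  under eq_bigr do rewrite mulrBl.
  rewrite sumrB (bigD1 i) //= eqxx mul1r big1; last first.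
    by move=> l /negPf ->; rewrite mul0r.
  rewrite (bigD1 j) //= eqxx mul1r big1; last first.
    by move=> l /negPf ->; rewrite mul0r mul0r.
  by rewrite e expRD !addr0 subrr.
rewrite /c eqxx (negPf hij) mul0r subr0 => /eqP; rewrite oner_eq0.
by [].
Qed.
End M.

Section C.
Variables (R : realType) (n m : nat) (a : 'I_m -> 'rV[R]_n).
Variables (x0 : 'rV[R]_n) (P : 'I_m * 'I_m -> 'rV[R]_n * 'rV[R]_n).

Definition yy l k := dotp (a l) (P k).1 - dotp (a l) (P k).2.
Definition KK k := 2 * \sum_(l < m) `|yy l k|.
Definition uu i := \sum_(k : 'I_m * 'I_m) yy i k ^+ 2.
Definition DD i j := \sum_(k : 'I_m * 'I_m) (yy i k - yy j k) ^+ 2.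

Variables (lam : 'rV[R]_m) (s : R) (beta : 'I_m).
Hypothesis hsum : \sum_(i < m) lam 0 i = 0.
Definition GG x := s + \sum_(i < m) lam 0 i * dotp (a i) x.

Lemma sum_lam_yy k : \sum_(i < m) lam 0 i * yy i k = GG (P k).1 - GG (P k).2.
Proof.
rewrite /GG /yy.
under eq_bigr do rewrite mulrBr.
rewrite sumrB; lra.
Qed.

Lemma sq_ident k : \sum_(i < m) lam 0 i * yy i k ^+ 2 =
  \sum_(i < m) lam 0 i * (yy i k - yy beta k) ^+ 2 +
  2 * yy beta k * (GG (P k).1 - GG (P k).2).
Proof.
rewrite -sum_lam_yy.
have e : forall i, lam 0 i * (yy i k - yy beta k) ^+ 2 =
   lam 0 i * yy i k ^+ 2 - 2 * yy beta k * (lam 0 i * yy i k) + yy beta k ^+ 2 * lam 0 i.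
  move=> i; ring.
under [X in _ = X + _]eq_bigr do rewrite e.
rewrite big_split sumrB /= -mulr_sumr -mulr_sumr hsum mulr0 addr0.
ring.
Qed.


Definition cc := 1 + \sum_(k : 'I_m * 'I_m) 2 * KK k.
Definition ww i := dotp (a i) x0 +
  \sum_(k : 'I_m * 'I_m) KK k * (dotp (a i) (P k).1 + dotp (a i) (P k).2) + uu i.

Lemma lin_eq : lin ww cc (lam, s) = GG x0 +
  \sum_(k : 'I_m * 'I_m) KK k * (GG (P k).1 + GG (P k).2) + \sum_(i < m) uu i * lam 0 i.
Proof.
rewrite /lin /= /ww /cc /GG.
under eq_bigr do rewrite !mulrDl.
rewrite !big_split /=.
have e1 : \sum_(i < m) (\sum_(k : 'I_m * 'I_m) KK k * (dotp (a i) (P k).1 + dotp (a i) (P k).2)) * lam 0 i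
  = \sum_(k : 'I_m * 'I_m) KK k * (\sum_(i < m) lam 0 i * dotp (a i) (P k).1 + \sum_(i < m) lam 0 i * dotp (a i) (P k).2).
  under eq_bigr do rewrite mulr_suml.
  rewrite exchange_big /=; apply: eq_bigr => k _.
  rewrite -big_split /= mulr_sumr; apply: eq_bigr => i _; ring.
rewrite e1.
have e2 : \sum_(k : 'I_m * 'I_m) KK k * (s + \sum_(i < m) lam 0 i * dotp (a i) (P k).1 + (s + \sum_(i < m) lam 0 i * dotp (a i) (P k).2))
  = s * \sum_(k : 'I_m * 'I_m) 2 * KK k + \sum_(k : 'I_m * 'I_m) KK k * (\sum_(i < m) lam 0 i * dotp (a i) (P k).1 + \sum_(i < m) lam 0 i * dotp (a i) (P k).2).
  rewrite mulr_sumr -big_split /=; apply: eq_bigr => k _; ring.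
rewrite e2.
have e3 : \sum_(i < m) dotp (a i) x0 * lam 0 i = \sum_(i < m) lam 0 i * dotp (a i) x0.
  by apply: eq_bigr => i _; rewrite mulrC.
rewrite e3; ring.
Qed.

Hypothesis hb : lam 0 beta = -1.
Hypothesis hpos : forall i, i != beta -> 0 <= lam 0 i.
Hypothesis hG : forall k, 0 <= GG (P k).1 /\ 0 <= GG (P k).2.
Variable del : R.
Hypothesis hD : forall i, i != beta -> del <= DD i beta.

Lemma sum_off : \sum_(i < m | i != beta) lam 0 i = 1.
Proof. by move: hsum; rewrite (bigD1 beta) //= hb; lra. Qed.

Lemma lin_ge : GG x0 + del <= lin ww cc (lam, s).
Proof.
rewrite lin_eq.
have eu : \sum_(i < m) uu i * lam 0 i = \sum_(k : 'I_m * 'I_m)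
   (\sum_(i < m) lam 0 i * (yy i k - yy beta k) ^+ 2 +
    2 * yy beta k * (GG (P k).1 - GG (P k).2)).
  rewrite /uu; under eq_bigr do rewrite mulr_suml.
  rewrite exchange_big /=; apply: eq_bigr => k _.
  rewrite -sq_ident; apply: eq_bigr => i _; ring.
rewrite eu big_split /=.
have h1 : 0 <= \sum_(k : 'I_m * 'I_m) KK k * (GG (P k).1 + GG (P k).2) +
   \sum_(k : 'I_m * 'I_m) 2 * yy beta k * (GG (P k).1 - GG (P k).2).
  rewrite -big_split /=; apply: sumr_ge0 => k _.
  have hy : `|yy beta k| <= \sum_(l < m) `|yy l k|.
    rewrite (bigD1 beta) //= lerDl; apply: sumr_ge0 => l _; exact: normr_ge0.
  move: hy; rewrite ler_norml => /andP [hy1 hy2].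
  have [g1 g2] := hG k.
  rewrite /KK; nra.
have h2 : del <= \sum_(k : 'I_m * 'I_m) \sum_(i < m) lam 0 i * (yy i k - yy beta k) ^+ 2.
  rewrite exchange_big /=.
  under eq_bigr do rewrite -mulr_sumr.
  rewrite (bigD1 beta) //=.
  have -> : \sum_(k : 'I_m * 'I_m) (yy beta k - yy beta k) ^+ 2 = 0.
    by rewrite big1 // => k _; rewrite subrr expr0n.
  rewrite mulr0 add0r.
  apply: (@le_trans _ _ (\sum_(i < m | i != beta) lam 0 i * del)).
    by rewrite -mulr_suml sum_off mul1r.
  apply: ler_sum => i hi; apply: ler_wpM2l; first exact: hpos.
  exact: hD.
lra.
Qed.

End C.


Lemma pert_aux (R : realType) (eps e x L : R) :
  `|e| <= eps -> eps * `|x| <= L -> 0 <= L + e * x.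
Proof.
move=> he hL.
have h1 : - `|e * x| <= e * x by have := lexx `|e * x|; rewrite ler_norml => /andP [].

have h2 : `|e * x| <= eps * `|x|.
  by rewrite normrM; apply: ler_wpM2r => //; exact: normr_ge0.
lra.
Qed.

Unset Implicit Arguments.
Theorem lemma5p10 (R : realType) (n m : nat) (a : 'I_m -> 'rV[R]_n)
    (X : set 'rV[R]_n) :
  X !=set0 -> closed X -> convexR X ->
  (0 < m)%N ->
  (forall c : 'I_m -> R,
     (forall x, X x -> \sum_(i < m) c i * expR (dotp (a i) x) = 0) ->
     forall i, c i = 0) ->
  ~ (exists (p d : 'rV[R]_m * R), d != 0 /\
       forall t : R, closure (circuit_graph a X) (p + t *: d)).
Proof.
move=> [x0 Xx0] _ _ m_gt0 Hind [p [d [dne Hline]]].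
have hsep := sep_pair Xx0 Hind.
have : forall ij : 'I_m * 'I_m, exists pq : 'rV[R]_n * 'rV[R]_n,
    X pq.1 /\ X pq.2 /\ (ij.1 != ij.2 ->
    (dotp (a ij.1) pq.1 - dotp (a ij.1) pq.2) -
    (dotp (a ij.2) pq.1 - dotp (a ij.2) pq.2) != 0).
  move=> [i j] /=; case: (eqVneq i j) => [_|hij].
    by exists (x0, x0).
  by have [p' [q' [hp [hq hne]]]] := hsep i j hij; exists (p', q').
move=> /choice [P HP].
pose S := \sum_(ij : 'I_m * 'I_m | ij.1 != ij.2) (DD a P ij.1 ij.2)^-1.
have DD_ge0 : forall i j, 0 <= DD a P i j.
  by move=> i j; apply: sumr_ge0 => k _; exact: sqr_ge0.
have S_ge0 : 0 <= S.
  by apply: sumr_ge0 => k _; rewrite invr_ge0.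
pose del := (1 + S)^-1.
have del_gt0 : 0 < del by rewrite invr_gt0; lra.
have del_le1 : del <= 1 by rewrite invr_le1 ?unitfE; lra.
have hD : forall i j, i != j -> del <= DD a P i j.
  move=> i j hij.
  have hpos : 0 < DD a P i j.
    apply: (@lt_le_trans _ _ ((yy a P i (i, j) - yy a P j (i, j)) ^+ 2)).
      have [_ [_ h]] := HP (i, j); have := h hij.
      rewrite /yy /= => hne.
      by rewrite lt_neqAle sqr_ge0 andbT eq_sym sqrf_eq0.
    rewrite /DD (bigD1 (i, j)) //= lerDl; apply: sumr_ge0 => k _.
    exact: sqr_ge0.
  have hS : (DD a P i j)^-1 <= S.
    rewrite /S (bigD1 (i, j)) //= lerDl; apply: sumr_ge0 => k _.
    by rewrite invr_ge0.
  rewrite /del -(@ler_pM2r _ (1 + S)); last lra.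
  rewrite mulVf; last by apply/eqP; lra.
  have : DD a P i j * (DD a P i j)^-1 = 1 by rewrite mulfV // gt_eqF.
  nra.
pose C0 := \sum_(i < m) `|dotp (a i) x0|.
have C0_ge0 : 0 <= C0 by apply: sumr_ge0 => i _; exact: normr_ge0.
pose eps := del / (1 + C0).
have eps_gt0 : 0 < eps by apply: divr_gt0 => //; lra.
have eps_eq : eps * (1 + C0) = del.
  by rewrite /eps -mulrA mulVf ?mulr1 //; apply/eqP; lra.
have eps_le1 : eps <= 1 by move: eps_eq del_le1; nra.
have eps_le_del : eps <= del by move: eps_eq; nra.
have KK_ge0 : forall k, 0 <= KK a P k.
  move=> k; rewrite /KK; apply: mulr_ge0 => //.
  by apply: sumr_ge0 => l _; exact: normr_ge0.
have cc_ge1 : 1 <= cc a P.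
  rewrite /cc lerDl; apply: sumr_ge0 => k _; apply: mulr_ge0 => //.
have Gen : forall g, (phi a X @` LambdaX a X `|` [set ((0 : 'rV[R]_m), (1 : R))]) g ->
    forall j, eps * `|g.1 0 j| <= lin (ww a x0 P) (cc a P) g /\
              eps * `|g.2| <= lin (ww a x0 P) (cc a P) g.
  move=> g [[lam [beta [[[hpos hsum] _ hlt _] hb]] <-]|->] j; last first.
    rewrite /lin /= big1; last by move=> i _; rewrite mxE mulr0.
    rewrite mxE normr0 normr1 mulr0 mulr1 addr0; split; lra.
  set s := fine (sigmaA a X lam).
  have hG : forall x, X x -> 0 <= GG a lam s x.
    by move=> x Xx; apply: gap_ge0.
  have hge := lin_ge x0 hsum hb hpos
      (fun k => conj (hG _ (proj1 (HP k))) (hG _ (proj1 (proj2 (HP k))))) (hD^~ beta).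
  have G0 := hG x0 Xx0.
  rewrite /phi /= -/s.
  split.
    have hl : `|lam 0 j| <= 1.
      case: (eqVneq j beta) => [->|hjb]; first by rewrite hb normrN normr1.
      rewrite ger0_norm; last exact: hpos.
      rewrite -(sum_off hsum hb) (bigD1 j) //= lerDl.
      by apply: sumr_ge0 => i /andP [hi _]; exact: hpos.
    have : eps * `|lam 0 j| <= eps by rewrite ler_piMr // ltW.
    lra.
  have hs : `|s| <= GG a lam s x0 + C0.
    have es : s = GG a lam s x0 - \sum_(i < m) lam 0 i * dotp (a i) x0.
      by rewrite /GG; ring.
    rewrite {1}es.
    apply: (le_trans (ler_normB _ _)).
    rewrite ger0_norm // lerD2l.
    apply: (le_trans (ler_norm_sum _ _ _)).
    apply: ler_sum => i _; rewrite normrM.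
    have hl : `|lam 0 i| <= 1.
      case: (eqVneq i beta) => [->|hjb]; first by rewrite hb normrN normr1.
      rewrite ger0_norm; last exact: hpos.
      rewrite -(sum_off hsum hb) (bigD1 i) //= lerDl.
      by apply: sumr_ge0 => k /andP [hk _]; exact: hpos.
    by rewrite -[X in _ <= X]mul1r; apply: ler_wpM2r => //; exact: normr_ge0.
  have e1 : eps * `|s| <= eps * (GG a lam s x0 + C0) by rewrite ler_pM2l.
  nra.
have Hz : forall (w : 'I_m -> R) (c : R),
    (forall g, (phi a X @` LambdaX a X `|` [set ((0 : 'rV[R]_m), (1 : R))]) g ->
       0 <= lin w c g) -> lin w c d = 0.
  move=> w c hg; apply: (lin_line (p := p)) => t.
  by apply: (lin_cone hg); exact: Hline.
have d1 : forall j, d.1 0 j = 0.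
  move=> j.
  have h1 : lin (fun i => ww a x0 P i + eps * (i == j)%:R) (cc a P) d = 0.
    apply: Hz => g hg; rewrite lin_pert1; apply: (pert_aux (eps := eps)).
      by rewrite ger0_norm ?(ltW eps_gt0).
    exact: (Gen g hg j).1.
  have h2 : lin (fun i => ww a x0 P i + - eps * (i == j)%:R) (cc a P) d = 0.
    apply: Hz => g hg; rewrite lin_pert1; apply: (pert_aux (eps := eps)).
      by rewrite normrN ger0_norm ?(ltW eps_gt0).
    exact: (Gen g hg j).1.
  rewrite !lin_pert1 in h1 h2.
  have : eps * d.1 0 j = 0 by lra.
  by move/eqP; rewrite mulf_eq0 gt_eqF //= => /eqP.
have d2 : d.2 = 0.
  pose ord0' : 'I_m := Ordinal m_gt0.
  have h1 : lin (ww a x0 P) (cc a P + eps) d = 0.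
    apply: Hz => g hg; rewrite lin_pert2; apply: (pert_aux (eps := eps)).
      by rewrite ger0_norm ?(ltW eps_gt0).
    exact: (Gen g hg ord0').2.
  have h2 : lin (ww a x0 P) (cc a P + - eps) d = 0.
    apply: Hz => g hg; rewrite lin_pert2; apply: (pert_aux (eps := eps)).
      by rewrite normrN ger0_norm ?(ltW eps_gt0).
    exact: (Gen g hg ord0').2.
  rewrite !lin_pert2 in h1 h2.
  have : eps * d.2 = 0 by lra.
  by move/eqP; rewrite mulf_eq0 gt_eqF //= => /eqP.
move: dne; clear Hz Hline; case: d d1 d2 => d1 d2 /= hd1 -> .
have -> : d1 = 0 by apply/rowP => j; rewrite hd1 mxE.
by rewrite eqxx.
Qed.
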